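(* Let $R_1,R_2$ be commutative rings with identity, $M_i$ an $R_i$-module, $S_i=R_i\setminus Z_{R_i}(M_i)$ for $i=1,2$, $R=R_1\times R_2$ and $M=M_1\times M_2$. Then $M$ satisfies proper strong Property $\mathcal{A}$ as an $R$-module if and only if for each $i=1,2$, $M_i$ satisfies proper strong Property $\mathcal{A}$ as an $R_i$-module and $S_i^{-1}R_i=R_i$.
   Context: For an $R$-module $M$, $Z_R(M)=\{r\in R: rm=0 \text{ for some } 0\neq m\in M\}$. $M$ satisfies proper strong Property $\mathcal{A}$ if for every proper finitely generated ideal $I=\langle a_1,\dots,a_n\rangle$ of $R$ with $a_i\in Z_R(M)$ for all $i$, we have $(0:_M I)\neq 0$. For a multiplicatively closed set $S$, ''$S^{-1}R=R$'' means that the canonical map $R\to S^{-1}R$ is an isomorphism (equivalently every element of $S$ is a unit of $R$). $M_1\times M_2$ is an $R_1\times R_2$-module via componentwise operations. *)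

(* Defs.v *)
From HB Require Import structures.
From mathcomp Require Import all_boot all_order all_algebra.
Set Implicit Arguments. Unset Strict Implicit. Unset Printing Implicit Defensive.
Import GRing.Theory.
Local Open Scope ring_scope.

Definition zdiv {R : comPzRingType} (M : lmodType R) (r : R) : Prop :=
  exists m : M, m != 0 /\ r *: m = 0.

Definition in_ideal (R : comPzRingType) (a : seq R) (r : R) : Prop :=
  exists c : seq R, size c = size a /\ r = \sum_(i < size a) c`_i * a`_i.

Definition in_colon {R : comPzRingType} (M : lmodType R) (a : seq R) (m : M)
  : Prop := forall r, in_ideal a r -> r *: m = 0.

Definition proper_strong_A {R : comPzRingType} (M : lmodType R) : Prop :=
  forall a : seq R, (0 < size a)%N ->
    (forall x, x \in a -> zdiv M x) ->
    ~ in_ideal a 1 ->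
    exists m : M, m != 0 /\ in_colon a m.

(* S^{-1} R = R, with S = R \ Z_R(M): every element of S is a unit of R *)
Definition loc_compl_trivial {R : comPzRingType} (M : lmodType R) : Prop :=
  forall s : R, ~ zdiv M s -> exists t : R, s * t = 1.

Section ProdMod.
Variables (R1 R2 : comPzRingType) (M1 : lmodType R1) (M2 : lmodType R2).
Definition prodmod : Type := (M1 * M2)%type.
HB.instance Definition _ := GRing.Zmodule.on prodmod.
Definition prodmod_scale (r : R1 * R2) (m : prodmod) : prodmod :=
  (r.1 *: m.1, r.2 *: m.2).
Lemma prodmod_scaleA a b (v : prodmod) :
  prodmod_scale a (prodmod_scale b v) = prodmod_scale (a * b) v.
Proof. by case: a b v => [a1 a2] [b1 b2] [v1 v2]; rewrite /prodmod_scale /= !scalerA. Qed.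
Lemma prodmod_scale1 (v : prodmod) : prodmod_scale 1 v = v.
Proof. by case: v => v1 v2; rewrite /prodmod_scale /= !scale1r. Qed.
Lemma prodmod_scaleDr a (u v : prodmod) :
  prodmod_scale a (u + v) = prodmod_scale a u + prodmod_scale a v.
Proof. by case: a u v => [a1 a2] [u1 u2] [v1 v2]; rewrite /prodmod_scale /= !scalerDr. Qed.
Lemma prodmod_scaleDl (v : prodmod) :
  {morph prodmod_scale^~ v : a b / a + b}.
Proof. by case: v => v1 v2 [a1 a2] [b1 b2]; rewrite /prodmod_scale /= !scalerDl. Qed.
HB.instance Definition _ := GRing.Zmodule_isLmodule.Build (R1 * R2)%type prodmod
  prodmod_scaleA prodmod_scale1 prodmod_scaleDr prodmod_scaleDl.
End ProdMod.

(* Main.v *)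
Require Import Defs.
From HB Require Import structures.
From mathcomp Require Import all_boot all_order all_algebra.
From Stdlib Require Import Classical.
Local Open Scope ring_scope.
Import GRing.Theory.

Lemma in_ideal_nil (R : comPzRingType) (r : R) : in_ideal [::] r <-> r = 0.
Proof.
split; first by case=> c [_ ->]; rewrite big_ord0.
by move->; exists [::]; rewrite big_ord0.
Qed.

Lemma in_ideal_cons (R : comPzRingType) (x : R) a r :
  in_ideal (x :: a) r <-> exists c s, in_ideal a s /\ r = c * x + s.
Proof.
split.
- case=> -[|c0 c] [//= [Hs] ->].
  exists c0, (\sum_(i < size a) c`_i * a`_i); split; first by exists c.
  by rewrite big_ord_recl.
- case=> c [s [[c' [Hs ->]] ->]]; exists (c :: c'); split; first by rewrite /= Hs.
  by rewrite big_ord_recl.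
Qed.

Section P.
Variables (R1 R2 : comPzRingType).

Lemma in_ideal_fst (a : seq (R1 * R2)%type) r :
  in_ideal a r -> in_ideal (map fst a) r.1.
Proof.
elim: a r => [|x a IH] r.
  by move/in_ideal_nil => ->; apply/in_ideal_nil.
move/in_ideal_cons => [c [s [Hs ->]]]; apply/in_ideal_cons.
by exists c.1, s.1; split; [exact: IH|].
Qed.

Lemma in_ideal_snd (a : seq (R1 * R2)%type) r :
  in_ideal a r -> in_ideal (map snd a) r.2.
Proof.
elim: a r => [|x a IH] r.
  by move/in_ideal_nil => ->; apply/in_ideal_nil.
move/in_ideal_cons => [c [s [Hs ->]]]; apply/in_ideal_cons.
by exists c.2, s.2; split; [exact: IH|].
Qed.

Lemma in_ideal_pair (a : seq (R1 * R2)%type) r1 r2 :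
  in_ideal (map fst a) r1 -> in_ideal (map snd a) r2 -> in_ideal a (r1, r2).
Proof.
elim: a r1 r2 => [|x a IH] r1 r2.
  by move=> /in_ideal_nil -> /in_ideal_nil ->; apply/in_ideal_nil.
move=> /in_ideal_cons [c1 [s1 [H1 ->]]] /in_ideal_cons [c2 [s2 [H2 ->]]].
apply/in_ideal_cons; exists (c1, c2), (s1, s2); split; first exact: IH.
by case: x.
Qed.

End P.
Arguments in_ideal_fst {R1 R2 a r}.
Arguments in_ideal_snd {R1 R2 a r}.
Arguments in_ideal_pair {R1 R2 a r1 r2}.

Section Main.
Variables (R1 R2 : comPzRingType) (M1 : lmodType R1) (M2 : lmodType R2).

Lemma scale_pair (r : (R1 * R2)%type) (u : M1) (v : M2) :
  r *: ((u, v) : prodmod M1 M2) = ((r.1 *: u, r.2 *: v) : prodmod M1 M2).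
Proof. by []. Qed.

Lemma pair_eq0 (u : M1) (v : M2) :
  ((u, v) : prodmod M1 M2) = 0 <-> u = 0 /\ v = 0.
Proof. by split; [case=> -> ->|case=> -> ->]. Qed.

Lemma in_ideal_inl (a : seq R1) r :
  in_ideal a r -> in_ideal (map (fun x => (x, 0 : R2)) a) (r, 0).
Proof.
elim: a r => [|x a IH] r.
  by move/in_ideal_nil => ->; apply/in_ideal_nil.
move/in_ideal_cons => [c [s [Hs ->]]]; apply/in_ideal_cons.
exists (c, 0), (s, 0); split; first exact: IH.
by apply: injective_projections; rewrite /= ?mul0r ?mulr0 ?addr0.
Qed.

Lemma in_ideal_inr (a : seq R2) r :
  in_ideal a r -> in_ideal (map (fun x => (0 : R1, x)) a) (0, r).
Proof.
elim: a r => [|x a IH] r.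
  by move/in_ideal_nil => ->; apply/in_ideal_nil.
move/in_ideal_cons => [c [s [Hs ->]]]; apply/in_ideal_cons.
exists (0, c), (0, s); split; first exact: IH.
by apply: injective_projections; rewrite /= ?mul0r ?mulr0 ?addr0.
Qed.
End Main.
Arguments in_ideal_inl {R1 R2 a r}.
Arguments in_ideal_inr {R1 R2 a r}.
Arguments pair_eq0 {R1 R2 M1 M2 u v}.
Arguments scale_pair {R1 R2 M1 M2}.

Lemma in_ideal0 (R : comPzRingType) (a : seq R) : in_ideal a 0.
Proof.
exists (nseq (size a) 0); rewrite size_nseq; split => //.
by rewrite big1 // => i _; rewrite nth_nseq if_same mul0r.
Qed.

Lemma in_ideal_mem (R : comPzRingType) (a : seq R) x t :
  x \in a -> in_ideal a (t * x).
Proof.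
elim: a => [|y a IH] //; rewrite inE => /orP [/eqP ->|xa]; apply/in_ideal_cons.
  by exists t, 0; split; [exact: in_ideal0|rewrite addr0].
by exists 0, (t * x); split; [exact: IH|rewrite mul0r add0r].
Qed.

Section Main2.
Variables (R1 R2 : comPzRingType) (M1 : lmodType R1) (M2 : lmodType R2).
Hypotheses (hM1 : exists m : M1, m != 0) (hM2 : exists m : M2, m != 0).

Lemma key1 : proper_strong_A (prodmod M1 M2) -> forall a : seq R1,
  ~ in_ideal a 1 -> exists m1 : M1, m1 != 0 /\ in_colon a m1.
Proof.
move=> psa a Ha.
set a' := ((0 : R1), (1 : R2)) :: map (fun x => (x, 0 : R2)) a.
have [m [mnz mcol]] : exists m : prodmod M1 M2, m != 0 /\ in_colon a' (m : prodmod M1 M2).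
  apply: psa => //.
  - move=> x; rewrite inE => /orP [/eqP -> | /mapP [y _ ->]].
    + case: hM1 => m1 hm1; exists (m1, 0); split.
        by apply/negP => /eqP /pair_eq0 [h _]; rewrite h eqxx in hm1.
      by rewrite scale_pair /= scale0r scaler0.
    + case: hM2 => m2 hm2; exists (0, m2); split.
        by apply/negP => /eqP /pair_eq0 [_ h]; rewrite h eqxx in hm2.
      by rewrite scale_pair /= scale0r scaler0.
  - move=> H; apply: Ha; have := in_ideal_fst H.
    have -> : map fst a' = 0 :: a by rewrite /a' /=; congr cons; elim: (a) => //= x l ->.
    by move/in_ideal_cons => [c [s [Hs e]]]; rewrite mulr0 add0r in e; rewrite -e in Hs.
case: m mnz mcol => m1 m2 mnz mcol.
have m20 : m2 = 0.
  have := mcol ((0 : R1), (1 : R2)).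
  rewrite scale_pair /= scale0r scale1r => h.
  suff H : in_ideal a' (0, 1).
    by have := pair_eq0.1 (h H); case.
  apply/in_ideal_cons; exists (0, 1), 0; split.
    by have := in_ideal_inl (@in_ideal0 _ a).
  by apply: injective_projections; rewrite /= ?mul0r ?mulr1 ?mul1r ?addr0.
exists m1; split.
  by apply: contra mnz => /eqP ->; rewrite m20.
move=> r Hr; have := mcol (r, 0).
rewrite scale_pair /= => h; suff H : in_ideal a' (r, 0).
  by have := pair_eq0.1 (h H); case.
apply/in_ideal_cons; exists 0, (r, 0); split; first exact: in_ideal_inl.
by apply: injective_projections; rewrite /= ?mul0r ?add0r.
Qed.

Lemma key2 : proper_strong_A (prodmod M1 M2) -> forall a : seq R2,
  ~ in_ideal a 1 -> exists m2 : M2, m2 != 0 /\ in_colon a m2.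
Proof.
move=> psa a Ha.
set a' := ((1 : R1), (0 : R2)) :: map (fun x => (0 : R1, x)) a.
have [m [mnz mcol]] : exists m : prodmod M1 M2, m != 0 /\ in_colon a' (m : prodmod M1 M2).
  apply: psa => //.
  - move=> x; rewrite inE => /orP [/eqP -> | /mapP [y _ ->]].
    + case: hM2 => m2 hm2; exists (0, m2); split.
        by apply/negP => /eqP /pair_eq0 [_ h]; rewrite h eqxx in hm2.
      by rewrite scale_pair /= scale0r scaler0.
    + case: hM1 => m1 hm1; exists (m1, 0); split.
        by apply/negP => /eqP /pair_eq0 [h _]; rewrite h eqxx in hm1.
      by rewrite scale_pair /= scale0r scaler0.
  - move=> H; apply: Ha; have := in_ideal_snd H.
    have -> : map snd a' = 0 :: a by rewrite /a' /=; congr cons; elim: (a) => //= x l ->.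
    by move/in_ideal_cons => [c [s [Hs e]]]; rewrite mulr0 add0r in e; rewrite -e in Hs.
case: m mnz mcol => m1 m2 mnz mcol.
have m10 : m1 = 0.
  have := mcol ((1 : R1), (0 : R2)).
  rewrite scale_pair /= scale0r scale1r => h.
  suff H : in_ideal a' (1, 0).
    by have := pair_eq0.1 (h H); case.
  apply/in_ideal_cons; exists (1, 0), 0; split.
    by have := in_ideal_inr (@in_ideal0 _ a).
  by apply: injective_projections; rewrite /= ?mul0r ?mulr1 ?mul1r ?addr0.
exists m2; split.
  by apply: contra mnz => /eqP ->; rewrite m10.
move=> r Hr; have := mcol (0, r).
rewrite scale_pair /= => h; suff H : in_ideal a' (0, r).
  by have := pair_eq0.1 (h H); case.
apply/in_ideal_cons; exists 0, (0, r); split; first exact: in_ideal_inr.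
by apply: injective_projections; rewrite /= ?mul0r ?add0r.
Qed.
End Main2.

Theorem theorem3p10 (R1 R2 : comPzRingType) (M1 : lmodType R1) (M2 : lmodType R2)
  (hM1 : exists m : M1, m != 0) (hM2 : exists m : M2, m != 0) :
  proper_strong_A (prodmod M1 M2) <->
  (proper_strong_A M1 /\ loc_compl_trivial M1) /\
  (proper_strong_A M2 /\ loc_compl_trivial M2).
Proof.
split.
- move=> psa.
  have k1 := @key1 _ _ _ _ hM1 hM2 psa; have k2 := @key2 _ _ _ _ hM1 hM2 psa.
  split; split.
  + by move=> a _ _ Ha; exact: k1.
  + move=> s ns; case: (classic (in_ideal [:: s] 1)) => [|H].
      move/in_ideal_cons => [c [t [/in_ideal_nil Ht e]]].
      by exists c; rewrite e Ht addr0 mulrC.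
    case: (k1 _ H) => m [mnz mc]; case: ns; exists m; split => //; apply: mc.
    by apply/in_ideal_cons; exists 1, 0; split; [exact/in_ideal_nil|rewrite mul1r addr0].
  + by move=> a _ _ Ha; exact: k2.
  + move=> s ns; case: (classic (in_ideal [:: s] 1)) => [|H].
      move/in_ideal_cons => [c [t [/in_ideal_nil Ht e]]].
      by exists c; rewrite e Ht addr0 mulrC.
    case: (k2 _ H) => m [mnz mc]; case: ns; exists m; split => //; apply: mc.
    by apply/in_ideal_cons; exists 1, 0; split; [exact/in_ideal_nil|rewrite mul1r addr0].
- case=> [[p1 l1] [p2 l2]] a asz _ Ha.
  have [H1|H2] : ~ in_ideal (map fst a) 1 \/ ~ in_ideal (map snd a) 1.
    case: (classic (in_ideal (map fst a) 1)) => h1; last by left.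
    case: (classic (in_ideal (map snd a) 1)) => h2; last by right.
    by case: Ha; exact: in_ideal_pair.
  + have zd : forall x, x \in map fst a -> zdiv M1 x.
      move=> x xa; case: (classic (zdiv M1 x)) => // nz.
      case: (l1 _ nz) => t ht; case: H1.
      by have := @in_ideal_mem _ _ _ t xa; rewrite mulrC ht.
    have [|m1 [nz mc]] := p1 _ _ zd H1; first by rewrite size_map.
    exists ((m1, 0) : prodmod M1 M2); split.
      by apply/negP => /eqP /pair_eq0 [h _]; rewrite h eqxx in nz.
    by move=> r Hr; rewrite scale_pair scaler0 (mc _ (in_ideal_fst Hr)).
  + have zd : forall x, x \in map snd a -> zdiv M2 x.
      move=> x xa; case: (classic (zdiv M2 x)) => // nz.
      case: (l2 _ nz) => t ht; case: H2.
      by have := @in_ideal_mem _ _ _ t xa; rewrite mulrC ht.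
    have [|m2 [nz mc]] := p2 _ _ zd H2; first by rewrite size_map.
    exists ((0, m2) : prodmod M1 M2); split.
      by apply/negP => /eqP /pair_eq0 [_ h]; rewrite h eqxx in nz.
    by move=> r Hr; rewrite scale_pair scaler0 (mc _ (in_ideal_snd Hr)).
Qed.
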